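(* Let $b$ be a positive integer, and let $w$ and $w'$ be (the 0-1 sequences of) $b$-bounded walks, possibly of different lengths. Then the concatenation of $w$ followed by the reversal of $w'$ (i.e. the sequence $w_1\cdots w_k\,w'_{k'}w'_{k'-1}\cdots w'_1$) is a bidirectional ballot sequence; equivalently, the concatenation of the walk $w$ followed by the reverse of the walk $w'$ is a bidirectional ballot walk.
   Context: A ballot sequence is a 0-1 sequence in which every nonempty prefix contains strictly more 1's than 0's; a bidirectional ballot sequence is a 0-1 sequence in which every nonempty prefix and every nonempty suffix contains strictly more 1's than 0's. A 0-1 sequence corresponds to a lattice walk starting at the origin, where each term $1$ is a step $(1,1)$ and each term $0$ is a step $(1,-1)$; ballot walks and bidirectional ballot walks are the walks of ballot sequences and bidirectional ballot sequences. For a positive integer $b$, a $b$-bounded walk is a ballot walk that never visits a point with $y>2b$ and whose endpoint has $y>b$. *)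

(* Defs.v *)
From mathcomp Require Import all_boot all_order all_algebra.
Set Implicit Arguments. Unset Strict Implicit. Unset Printing Implicit Defensive.
Import Order.TTheory GRing.Theory Num.Theory.
Local Open Scope ring_scope.

(* A 0-1 sequence is a [seq bool]: [true] = 1 (up-step), [false] = 0 (down-step). *)

Definition height (s : seq bool) : int :=
  (count id s)%:Z - (count negb s)%:Z.

Definition ballot (s : seq bool) : Prop :=
  forall n : nat, (0 < n <= size s)%N -> 0 < height (take n s).

Definition bidirectional_ballot (s : seq bool) : Prop :=
  ballot s /\
  forall n : nat, (0 < n <= size s)%N -> 0 < height (drop (size s - n) s).

Definition bounded_walk (b : nat) (s : seq bool) : Prop :=
  ballot s /\
  (forall n : nat, (n <= size s)%N -> height (take n s) <= (2 * b)%:Z) /\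
  b%:Z < height s.

(* Main.v *)
Require Import Defs.
From mathcomp Require Import all_boot all_order all_algebra.
From mathcomp Require Import zify ring lra.
Import Order.TTheory GRing.Theory Num.Theory.

Lemma heightD (s t : seq bool) : height (s ++ t) = (height s + height t)%R.
Proof. rewrite /height !count_cat !PoszD; ring. Qed.

Lemma heightR (s : seq bool) : height (rev s) = height s.
Proof. by rewrite /height !count_rev. Qed.

Lemma key b w w' : bounded_walk b w -> bounded_walk b w' -> ballot (w ++ rev w').
Proof.
move=> [bw [_ hw]] [_ [uw' hw']] n /andP[n0 nle].
rewrite take_cat.
case: (ltnP n (size w)) => hn.
  by apply: bw; rewrite n0 ltnW.
rewrite take_rev heightD heightR.
set m := (size w' - (n - size w))%N.
have hm : (m <= size w')%N by rewrite /m leq_subr.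
have := uw' m hm.
have e : height w' = (height (take m w') + height (drop m w'))%R
  by rewrite -heightD cat_take_drop.
move: hw hw' e; set x := height w; set y := height w';
set u := height (take m w'); set v := height (drop m w') => *.
lia.
Qed.

Theorem lemma11 (b : nat) (w w' : seq bool) :
  (0 < b)%N -> bounded_walk b w -> bounded_walk b w' ->
  bidirectional_ballot (w ++ rev w').
Proof.
move=> _ hw hw'; split; first exact: key hw hw'.
move=> n hn.
have hn' : (0 < n <= size (w' ++ rev w))%N by move: hn; rewrite !size_cat !size_rev addnC.
have := @key b w' w hw' hw n hn'.
have -> : w' ++ rev w = rev (w ++ rev w') by rewrite rev_cat revK.
by rewrite take_rev heightR.
Qed.
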